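(* Let $\mathbf{k}$ be an algebraically closed field of characteristic zero, let $X_\sigma$ be a normal affine toric variety over $\mathbf{k}$ without torus factors, and let $\pi:\mathbb{A}^r\to X_\sigma$, $G$ and $U$ be as in the context. Let $A=\mathbf{k}[x_1,\dots,x_r]^G$ be the algebra of $G$-invariant polynomials (identified with the algebra of regular functions on $X_\sigma$), let $\bar 0$ be the origin of $\mathbb{A}^r$ and $o=\pi(\bar 0)$. Then one can choose a collection of monomials generating $A$ such that the set $V\subset\mathbb{A}^r$ of common zeros of this collection is contained in $\pi^{-1}(o)$. Moreover, if $X_\sigma\neq U$, then $V\subset\pi^{-1}(X_\sigma\setminus U)$.
   Context: Notation: $N\cong\mathbb{Z}^n$ a lattice, $M$ its dual with pairing $\langle\cdot,\cdot\rangle$, $\sigma\subset N_{\mathbb R}$ a strongly convex rational polyhedral cone, $X_\sigma=\mathrm{Spec}\,\mathbf{k}[\sigma^\vee\cap M]$ (characters $\chi^m$). ''No torus factors'' means every invertible regular function on $X_\sigma$ is constant. $\rho_1,\dots,\rho_r\in N$ are the primitive generators of the extremal rays of $\sigma$. With coordinates $x_1,\dots,x_r$ on $\mathbb{A}^r$, $G=\{(t_1,\dots,t_r)\in\mathbb{G}_m^r:\prod_i t_i^{\langle m,\rho_i\rangle}=1\ \forall m\in M\}$ acts on $\mathbb A^r$ coordinatewise, and $\pi:\mathbb{A}^r\to\mathbb{A}^r/\!/G\cong X_\sigma$ is the categorical quotient, given by $\pi^*(\chi^m)=\prod_{l=1}^r x_l^{\langle m,\rho_l\rangle}$. $U$ is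 the set of $u\in X_\sigma$ such that $\pi^{-1}(u)$ is a single $G$-orbit. *)

(* Defs.v *)
From HB Require Import structures.
From mathcomp Require Import all_boot all_order all_algebra.
From mathcomp Require Import mpoly.
Set Implicit Arguments. Unset Strict Implicit. Unset Printing Implicit Defensive.
Import Order.TTheory GRing.Theory Num.Theory.
Local Open Scope ring_scope.

(* N = M = Z^n; vectors are functions 'I_n -> int.
   rho : 'I_r -> 'I_n -> int lists the candidate ray generators rho_1..rho_r. *)

Definition pairing (n : nat) (m v : 'I_n -> int) : int := \sum_(j < n) m j * v j.

Definition in_cone (n r : nat) (rho : 'I_r -> 'I_n -> int) (v : 'I_n -> rat) : Prop :=
  exists lam : 'I_r -> rat, (forall i, 0 <= lam i) /\
    forall j, v j = \sum_(i < r) lam i * (rho i j)%:~R.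

Definition on_ray (n : nat) (v w : 'I_n -> rat) : Prop :=
  exists c : rat, 0 <= c /\ forall j, w j = c * v j.

Definition strongly_convex (n r : nat) (rho : 'I_r -> 'I_n -> int) : Prop :=
  forall v, in_cone rho v -> in_cone rho (fun j => - v j) -> forall j, v j = 0.

Definition extremal_ray_gen (n r : nat) (rho : 'I_r -> 'I_n -> int)
    (v : 'I_n -> rat) : Prop :=
  [/\ exists j, v j != 0, in_cone rho v &
      forall a b, in_cone rho a -> in_cone rho b ->
        on_ray v (fun j => a j + b j) -> on_ray v a /\ on_ray v b].

Definition rhoQ (n r : nat) (rho : 'I_r -> 'I_n -> int) (i : 'I_r) : 'I_n -> rat :=
  fun j => (rho i j)%:~R.

Definition primitive_vec (n : nat) (w : 'I_n -> int) : Prop :=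
  (\big[gcdn/0%N]_(j < n) absz (w j))%N = 1%N.

Definition ray_generators (n r : nat) (rho : 'I_r -> 'I_n -> int) : Prop :=
  [/\ forall i i', (forall j, rho i j = rho i' j) -> i = i',
      forall i, primitive_vec (rho i),
      forall i, extremal_ray_gen rho (rhoQ rho i) &
      forall v, extremal_ray_gen rho v -> exists i, on_ray (rhoQ rho i) v].

Definition dual_mem (n r : nat) (rho : 'I_r -> 'I_n -> int) (m : 'I_n -> int) : Prop :=
  forall i, 0 <= pairing m (rho i).

(* No torus factors: the invertible elements of k[sigma^vee /\ M] are the
   c chi^m with c <> 0 and m in sigma^vee /\ -sigma^vee; so "every invertible
   regular function is constant" says sigma^vee /\ -sigma^vee /\ M = {0}. *)
Definition no_torus_factors (n r : nat) (rho : 'I_r -> 'I_n -> int) : Prop :=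
  forall m, dual_mem rho m -> dual_mem rho (fun j => - m j) -> forall j, m j = 0.

Definition Gmem (k : fieldType) (n r : nat) (rho : 'I_r -> 'I_n -> int)
    (t : 'I_r -> k) : Prop :=
  (forall i, t i != 0) /\
  forall m : 'I_n -> int, \prod_(i < r) t i ^ (pairing m (rho i)) = 1.

Definition act (k : fieldType) (r : nat) (t x : 'I_r -> k) : 'I_r -> k :=
  fun i => t i * x i.

(* k-points of X_sigma = Spec k[sigma^vee /\ M]: monoid homomorphisms
   (sigma^vee /\ M, +) -> (k, mult), i.e. values u(m) = chi^m(u);
   only the values on sigma^vee /\ M are meaningful. *)
Definition Xpoint (k : fieldType) (n r : nat) (rho : 'I_r -> 'I_n -> int)
    (u : ('I_n -> int) -> k) : Prop :=
  u (fun _ => 0) = 1 /\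
  forall m m', dual_mem rho m -> dual_mem rho m' ->
    u (fun j => m j + m' j) = u m * u m'.

Definition piX (k : fieldType) (n r : nat) (rho : 'I_r -> 'I_n -> int)
    (x : 'I_r -> k) : ('I_n -> int) -> k :=
  fun m => \prod_(l < r) x l ^ (pairing m (rho l)).

Definition in_fiber (k : fieldType) (n r : nat) (rho : 'I_r -> 'I_n -> int)
    (u : ('I_n -> int) -> k) (x : 'I_r -> k) : Prop :=
  forall m, dual_mem rho m -> piX rho x m = u m.

Definition in_U (k : fieldType) (n r : nat) (rho : 'I_r -> 'I_n -> int)
    (u : ('I_n -> int) -> k) : Prop :=
  exists x0 : 'I_r -> k, forall x,
    in_fiber rho u x <-> exists t, Gmem rho t /\ forall i, x i = act t x0 i.

Definition G_invariant (k : fieldType) (n r : nat) (rho : 'I_r -> 'I_n -> int)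
    (f : {mpoly k[r]}) : Prop :=
  forall t, Gmem rho t -> forall x : 'I_r -> k, f.@[act t x] = f.@[x].

Definition generates_inv (k : fieldType) (n r : nat) (rho : 'I_r -> 'I_n -> int)
    (S : 'X_{1..r} -> Prop) : Prop :=
  forall f, G_invariant rho f ->
  forall B : {mpoly k[r]} -> Prop,
    (forall c : k, B c%:MP) ->
    (forall p q, B p -> B q -> B (p + q)) ->
    (forall p q, B p -> B q -> B (p * q)) ->
    (forall m, S m -> B 'X_[m]) ->
    B f.

(* Main.v *)
Require Import Defs.
From HB Require Import structures.
From mathcomp Require Import all_boot all_order all_algebra.
From mathcomp Require Import mpoly.
From mathcomp Require Import ring zify.
From Stdlib Require Import FunctionalExtensionality ClassicalEpsilon Classical.
Set Implicit Arguments. Unset Strict Implicit. Unset Printing Implicit Defensive.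
Import Order.TTheory GRing.Theory Num.Theory.
Local Open Scope ring_scope.

Lemma digits_inj (N : nat) : forall r (a b : 'I_r -> nat),
  (forall i, a i < N)%N -> (forall i, b i < N)%N ->
  (\sum_(i < r) a i * N ^ i = \sum_(i < r) b i * N ^ i)%N -> forall i, a i = b i.
Proof.
elim=> [|r IH] a b ha hb e i; first by case: i.
have N0 : (0 < N)%N by apply: leq_ltn_trans (ha ord0).
have key : forall c : 'I_r.+1 -> nat,
  (\sum_(i < r.+1) c i * N ^ i = c ord0 + \sum_(i < r) c (lift ord0 i) * N ^ i * N)%N.
  move=> c; rewrite big_ord_recl /= expn0 muln1; congr (_ + _)%N.
  by apply: eq_bigr => j _; rewrite /bump /= expnS (mulnC N) mulnA.
rewrite !key in e.
have e0 : a ord0 = b ord0.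
  have := congr1 (modn^~ N) e; rewrite /= -!big_distrl /= !(addnC (a ord0)) !(addnC (b ord0)).
  by rewrite !modnMDl !modn_small.
have e1 : (\sum_(i < r) a (lift ord0 i) * N ^ i = \sum_(i < r) b (lift ord0 i) * N ^ i)%N.
  have := congr1 (divn^~ N) e; rewrite /= -!big_distrl /= !(addnC (a ord0)) !(addnC (b ord0)).
  by rewrite !divnMDl // !divn_small // !addn0.
case: (unliftP ord0 i) => [j ->|->] //.
exact: (IH (fun j => a (lift ord0 j)) (fun j => b (lift ord0 j))).
Qed.

Lemma natr_inj0 (k : fieldType) : [pchar k] =i pred0 -> injective (fun i : nat => (i%:R : k)).
Proof.
move=> /pcharf0P h.
have H: forall i j : nat, (i <= j)%N -> (i%:R : k) = j%:R -> i = j.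
  move=> i j le e; apply/eqP; rewrite eqn_leq le /= -subn_eq0 -h natrB //.
  by rewrite e subrr.
move=> i j /= e; case: (leqP i j) => [le|lt]; first exact: H.
by symmetry; apply: H (ltnW lt) _.
Qed.

Lemma mpoly_ident (k : fieldType) r (p : {mpoly k[r]}) :
  [pchar k] =i pred0 -> (forall x, p.@[x] = 0) -> p = 0.
Proof.
move=> ch hp.
set N := msize p.
have hN : forall a, a \in msupp p -> forall i, (a i < N)%N.
  move=> a ha i; apply: leq_ltn_trans (msize_mdeg_lt ha).
  by rewrite mdegE (bigD1 i) //= leq_addr.
pose kap (a : 'X_{1..r}) := (\sum_(i < r) a i * N ^ i)%N.
pose q : {poly k} := \sum_(a <- msupp p) p@_a *: 'X^(kap a).
have hq : forall s, q.[s] = p.@[fun i => s ^+ (N ^ i)].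
  move=> s; rewrite mevalE horner_sum; apply: eq_bigr => a _.
  rewrite hornerZ hornerXn; congr (_ * _).
  rewrite /kap -prodrXr; apply: eq_bigr => i _; by rewrite -exprM mulnC.
have q0 : q = 0.
  apply: (@roots_geq_poly_eq0 _ _ [seq i%:R | i <- iota 0 (size q)]).
  - by apply/allP => x /mapP [i _ ->]; rewrite /root hq hp.
  - by rewrite map_inj_uniq ?iota_uniq //; apply: natr_inj0.
  - by rewrite size_map size_iota.
apply/mpolyP => a; rewrite mcoeff0.
case: (boolP (a \in msupp p)) => ha; last exact: memN_msupp_eq0.
have := congr1 (fun q : {poly k} => q`_(kap a)) q0; rewrite /= coef0 coef_sumMXn.
rewrite big_mkcond (bigD1_seq a) ?msupp_uniq //= eqxx /= big_seq_cond big1 ?addr0 //.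
move=> b /andP [hbs hb]; case: eqP => // e; exfalso; move: hb => /negP; apply; apply/eqP/mnmP => i.
apply: (@digits_inj N r (fun i => b i) (fun i => a i)) => //; by move=> j; apply: hN.
Qed.

Lemma mpoly_ident2 (k : fieldType) r (p q : {mpoly k[r]}) :
  [pchar k] =i pred0 -> (forall x, p.@[x] = q.@[x]) -> p = q.
Proof.
move=> ch h; apply/eqP; rewrite -subr_eq0; apply/eqP; apply: mpoly_ident => // x.
by rewrite mevalB h subrr.
Qed.

Lemma mevalX_act (k : fieldType) r (t x : 'I_r -> k) (a : 'X_{1..r}) :
  ('X_[a] : {mpoly k[r]}).@[act t x] = \prod_i t i ^+ a i * ('X_[a] : {mpoly k[r]}).@[x].
Proof. by rewrite !mevalX -big_split /=; apply: eq_bigr => i _; rewrite /act exprMn. Qed.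

Lemma inv_coef (k : fieldType) n r (rho : 'I_r -> 'I_n -> int) (f : {mpoly k[r]}) (t : 'I_r -> k) a :
  [pchar k] =i pred0 -> G_invariant rho f -> Gmem rho t -> a \in msupp f ->
  \prod_i t i ^+ a i = 1.
Proof.
move=> ch hf ht ha.
pose ft := \sum_(b <- msupp f) (f@_b * \prod_i t i ^+ b i) *: ('X_[b] : {mpoly k[r]}).
have e : ft = f.
  apply: mpoly_ident2 => // x; rewrite -(hf t ht x) [in RHS]mevalE.
  rewrite /ft raddf_sum /=; apply: eq_bigr => b _.
  rewrite mevalZ mevalX -mulrA; congr (_ * _); rewrite -big_split; apply: eq_bigr => i _; by rewrite /act exprMn.
have := congr1 (mcoeff a) e; rewrite /ft raddf_sum /= (bigD1_seq a) ?msupp_uniq //=.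
rewrite [\sum_(i <- _ | _) _]big1 ?addr0; last first.
  by move=> b hb; rewrite -mul_mpolyC mcoeffCM mcoeffX (negbTE hb) mulr0.
rewrite -mul_mpolyC mcoeffCM mcoeffX eqxx mulr1.
move=> e2; apply: (@mulfI _ (f@_a)); first by rewrite mcoeff_eq0 ha.
by rewrite e2 mulr1.
Qed.

Lemma generation (k : fieldType) n r (rho : 'I_r -> 'I_n -> int) :
  [pchar k] =i pred0 ->
  generates_inv k rho (fun a => a != 0%MM /\ G_invariant rho ('X_[a] : {mpoly k[r]})).
Proof.
move=> ch f hf B hC hD hM hS.
rewrite [f]mpolyE big_seq; apply: (big_ind B) => //; first by rewrite -mpolyC0.
move=> a ha; rewrite -mul_mpolyC; apply: hM => //.
case: (boolP (a == 0%MM)) => [/eqP ->|a0]; first by rewrite mpolyX0 -mpolyC1.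
apply: hS; split => // t ht x.
by rewrite mevalX_act (inv_coef ch hf ht ha) mul1r.
Qed.

Lemma pairingD n (m m' v : 'I_n -> int) :
  pairing (fun j => m j + m' j) v = pairing m v + pairing m' v.
Proof. by rewrite /pairing -big_split; apply: eq_bigr => j _; rewrite mulrDl. Qed.

Lemma pairingB n (m m' v : 'I_n -> int) :
  pairing (fun j => m j - m' j) v = pairing m v - pairing m' v.
Proof. by rewrite /pairing -sumrB; apply: eq_bigr => j _; rewrite mulrBl. Qed.

Lemma pairingZ n (c : int) (m v : 'I_n -> int) :
  pairing (fun j => c * m j) v = c * pairing m v.
Proof. by rewrite /pairing mulr_sumr; apply: eq_bigr => j _; rewrite mulrA. Qed.

Lemma pairing0 n (v : 'I_n -> int) : pairing (fun _ => 0) v = 0.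
Proof. by rewrite /pairing big1 // => j _; rewrite mul0r. Qed.

Lemma pairing_sum n (I : Type) (s : seq I) (P : pred I) (F : I -> 'I_n -> int) v :
  pairing (fun j => \sum_(i <- s | P i) F i j) v = \sum_(i <- s | P i) pairing (F i) v.
Proof.
rewrite /pairing; under eq_bigr do rewrite mulr_suml; exact: exchange_big.
Qed.

Lemma expz_nat (R : unitRingType) (x : R) (z : int) : 0 <= z -> x ^ z = x ^+ `|z|%N.
Proof. by case: z. Qed.

Lemma piX_nat (k : fieldType) n r (rho : 'I_r -> 'I_n -> int) (y : 'I_r -> k) m :
  dual_mem rho m -> piX rho y m = \prod_l y l ^+ `|pairing m (rho l)|%N.
Proof. by move=> hm; apply: eq_bigr => l _; apply: expz_nat (hm l). Qed.

Lemma cond3 (k : fieldType) n r (rho : 'I_r -> 'I_n -> int) (x : 'I_r -> k) :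
  (forall a, (a != 0%MM /\ G_invariant rho ('X_[a] : {mpoly k[r]})) ->
     ('X_[a] : {mpoly k[r]}).@[x] = 0) ->
  forall m, dual_mem rho m -> piX rho x m = piX rho (fun _ => 0) m.
Proof.
move=> hx m hm; rewrite !piX_nat //.
case: (boolP [forall l : 'I_r, `|pairing m (rho l)|%N == 0%N]) => [/forallP h0|].
  by rewrite !big1 // => l _; rewrite (eqP (h0 l)) expr0.
rewrite negb_forall => /existsP [l0 hl0].
set a := [multinom `|pairing m (rho i)|%N | i < r].
have ha : a != 0%MM.
  apply/negP => /eqP/mnmP/(_ l0); rewrite mnmE mnm0E => e; by rewrite e in hl0.
have hinv : G_invariant rho ('X_[a] : {mpoly k[r]}).
  move=> t ht y; rewrite mevalX_act.
  have -> : \prod_i t i ^+ a i = 1.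
    rewrite -[RHS](proj2 ht m); apply: eq_bigr => i _; rewrite mnmE; by rewrite expz_nat.
  by rewrite mul1r.
have := hx a (conj ha hinv); rewrite mevalX.
move=> h; have -> : \prod_l x l ^+ `|pairing m (rho l)|%N = 0.
  by rewrite -h; apply: eq_bigr => i _; rewrite mnmE.
symmetry.
by rewrite (bigD1 l0) //= expr0n (negbTE hl0) mul0r.
Qed.

Lemma stepA (k : fieldType) n r (rho : 'I_r -> 'I_n -> int) :
  in_U rho (piX rho (fun _ : 'I_r => (0:k))) ->
  forall i, exists m, [/\ dual_mem rho m, 0 < pairing m (rho i) &
     forall l, l != i -> pairing m (rho l) = 0].
Proof.
move=> [x0 hx0] i.
have f0 : in_fiber rho (piX rho (fun _ => 0)) (fun _ : 'I_r => (0:k)) by [].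
have [t [ht e]] := (hx0 _).1 f0.
have x00 : forall l, x0 l = 0.
  move=> l; have := e l; rewrite /act => /esym/eqP.
  by rewrite mulf_eq0 (negbTE (proj1 ht l)) /= => /eqP.
pose ei := fun l : 'I_r => if l == i then (1:k) else 0.
have nf : ~ in_fiber rho (piX rho (fun _ => 0)) ei.
  move=> /(hx0 _).1 [t' [_ e']]; have := e' i.
  by rewrite /act x00 mulr0 /ei eqxx => /eqP; rewrite oner_eq0.
apply: NNPP => hne; apply: nf => m hm.
rewrite !piX_nat //.
case: (boolP [forall l : 'I_r, (l != i) ==> (pairing m (rho l) == 0)]) => [/forallP h|].
  case: (boolP (pairing m (rho i) == 0)) => [/eqP hi|hi].
    rewrite !big1 // => l _; suff -> : pairing m (rho l) = 0 by [];
      by case: (eqVneq l i) => [->|hl] //; apply/eqP; apply: (implyP (h l)).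
  exfalso; apply: hne; exists m; split => //.
    by rewrite lt_def hi (hm i).
  by move=> l hl; apply/eqP; apply: (implyP (h l)).
rewrite negb_forall => /existsP [l]; rewrite negb_imply => /andP [hl hl0].
rewrite (bigD1 l) //= [in RHS](bigD1 l) //= /ei (negbTE hl) expr0n.
have -> : (`|pairing m (rho l)|%N == 0%N) = false by rewrite absz_eq0; apply/negbTE.
by rewrite !mul0r.
Qed.

Lemma ex_min_nat (Q : nat -> Prop) : (exists n, Q n) ->
  exists n, Q n /\ forall m, (m < n)%N -> ~ Q m.
Proof.
move=> [n hn]; apply: NNPP => hne.
suff H : forall N m, (m <= N)%N -> ~ Q m by exact: (H n n (leqnn n) hn).
elim=> [|N IH] m hm hq.
  apply: hne; exists m; split => // m' hm'; by move: hm; rewrite leqn0 => /eqP e; rewrite e in hm'.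
case: (leqP m N) => [h|h]; first exact: (IH m h).
apply: hne; exists m; split => // m' hm'; apply: IH; by rewrite -ltnS (leq_trans hm').
Qed.

Lemma ext1 (k : closedFieldType) (T : Type) (K : T -> Prop) (F : T -> int) (phi : T -> k) :
  (forall p, K p -> phi p != 0) ->
  (forall p p', K p -> K p' ->
     exists p'', [/\ K p'', F p'' = F p - F p' & phi p'' = phi p / phi p']) ->
  (forall p, K p -> F p = 0 -> phi p = 1) ->
  exists z : k, z != 0 /\ forall p, K p -> phi p = z ^ F p.
Proof.
move=> hnz hcl h0.
case: (classic (exists p, K p /\ F p != 0)) => [[p0 [hp0 hF0]]|hno]; last first.
  exists 1; split; first exact: oner_neq0.
  move=> p hp; rewrite exp1rz; apply: h0 => //; apply: NNPP => hF; apply: hno.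
  by exists p; split => //; apply/eqP.
have [pz [hpz Fz phz]] := hcl p0 p0 hp0 hp0.
rewrite subrr in Fz; rewrite divff ?hnz // in phz.
have hneg : forall p, K p -> exists p', [/\ K p', F p' = - F p & phi p' = (phi p)^-1].
  move=> p hp; have [p' [hp' F' ph']] := hcl pz p hpz hp.
  by exists p'; split => //; [rewrite F' Fz sub0r | rewrite ph' phz div1r].
have [n0 [[n0pos [ps [hps Fps]]] nmin]] :
  exists n, ((0 < n)%N /\ exists p, K p /\ F p = n%:Z) /\
            forall m, (m < n)%N -> ~ ((0 < m)%N /\ exists p, K p /\ F p = m%:Z).
  apply: ex_min_nat.
  case: (ltP 0 (F p0)) => [pos|npos].
    exists `|F p0|%N; split; first by rewrite absz_gt0.
    by exists p0; split => //; rewrite gtz0_abs.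
  have [p1 [hp1 F1 _]] := hneg p0 hp0.
  exists `|F p0|%N; split; first by rewrite absz_gt0.
  exists p1; split => //; rewrite F1 ltz0_abs //.
  by rewrite lt_neqAle hF0 npos.
set d := n0 in Fps n0pos nmin.
have mult : forall q : nat, exists p, [/\ K p, F p = (q%:Z) * d%:Z & phi p = phi ps ^+ q].
  elim=> [|q [p [hp Fp php]]]; first by exists pz; split; rewrite ?mul0r ?expr0.
  have [pn [hpn Fpn phn]] := hneg ps hps.
  have [p' [hp' F' ph']] := hcl p pn hp hpn.
  exists p'; split => //; first by rewrite F' Fp Fpn Fps opprK -addn1 PoszD mulrDl mul1r.
  by rewrite ph' php phn invrK exprSr.
have multz : forall q : int, exists p, K p /\ F p = q * d%:Z /\ phi p = phi ps ^ q.
  case=> q.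
    by have [p [? ? ?]] := mult q; exists p; split; last split.
  have [p [hp Fp php]] := mult q.+1; have [p' [hp' F' ph']] := hneg p hp.
  exists p'; split => //; split; first by rewrite F' Fp NegzE mulNr.
  by rewrite ph' php NegzE exprnN.
have d0 : (d%:Z != 0) by rewrite eqz_nat -lt0n.
have key : forall p, K p -> phi p = phi ps ^ (F p %/ d%:Z)%Z /\ F p = ((F p %/ d%:Z)%Z * d%:Z).
  move=> p hp.
  have [pq [hpq [Fpq phq]]] := multz (F p %/ d%:Z)%Z.
  have [p' [hp' F' ph']] := hcl p pq hp hpq.
  have Fp' : F p' = (F p %% d%:Z)%Z by rewrite F' Fpq {1}(divz_eq (F p) d%:Z) addrAC subrr add0r.
  have rem0 : F p' = 0.
    apply: NNPP => hne; apply: (nmin `|F p'|%N).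
      rewrite -ltz_nat gez0_abs; last by rewrite Fp' modz_ge0.
      by move: (ltz_mod (F p) d0); rewrite Fp'.
    split; first by rewrite absz_gt0; apply/eqP.
    by exists p'; split => //; rewrite gez0_abs // Fp' modz_ge0.
  split; last by rewrite {1}(divz_eq (F p) d%:Z) -Fp' rem0 addr0.
  have := h0 p' hp' rem0; rewrite ph' => e.
  by rewrite -phq -[phi p](divfK (hnz pq hpq)) e mul1r.
have [z hz] := @solve_monicpoly k d (fun i => if i == 0%N then phi ps else 0) n0pos.
rewrite (bigD1 (Ordinal n0pos)) //= big1 ?addr0 ?expr0 ?mulr1 in hz; last first.
  move=> i hi; case: eqP => [e|_]; last by rewrite mul0r.
  by exfalso; move: hi; rewrite -val_eqE /= e.
exists z; split.
  apply/negP => /eqP z0; move: hz; rewrite z0 expr0n eqn0Ngt n0pos /= => /esym/eqP; by rewrite (negbTE (hnz ps hps)).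
move=> p hp; have [-> e] := key p hp; by rewrite -hz exprnP exprz_exp {2}e mulrC.
Qed.

Lemma prod_expz_sub (k : fieldType) s (y : 'I_s -> k) (a b : 'I_s -> int) :
  (forall i, y i != 0) ->
  \prod_i y i ^ (a i - b i) = \prod_i y i ^ a i / \prod_i y i ^ b i.
Proof.
move=> hy; rewrite -prodf_div; apply: eq_bigr => i _.
by rewrite expfzDr // invr_expz.
Qed.

Lemma ext (k : closedFieldType) s (T : Type) (f : T -> 'I_s -> int) (g : T -> k) :
  (forall p, g p != 0) ->
  (forall p p', exists p'', (forall i, f p'' i = f p i - f p' i) /\ g p'' = g p / g p') ->
  (forall p, (forall i, f p i = 0) -> g p = 1) ->
  exists y : 'I_s -> k, (forall i, y i != 0) /\ forall p, g p = \prod_i y i ^ f p i.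
Proof.
move=> hnz hcl h0.
suff H : forall j, (j <= s)%N -> exists y : 'I_s -> k, [/\ forall i, y i != 0,
    forall i : 'I_s, (j <= i)%N -> y i = 1 &
    forall p, (forall i : 'I_s, (j <= i)%N -> f p i = 0) -> g p = \prod_i y i ^ f p i].
  have [y [hy _ hp]] := H s (leqnn s); exists y; split => // p; apply: hp => i hi.
  by move: (ltn_ord i); rewrite ltnNge hi.
elim=> [_|j IH hjs].
  exists (fun _ => 1); split => //; first by move=> i; rewrite oner_neq0.
  move=> p hp; rewrite h0; first by rewrite big1 // => i _; rewrite exp1rz.
  by move=> i; apply: hp.
have [y [hy hy1 hyp]] := IH (ltnW hjs).
pose J := Ordinal hjs.
pose K := fun p => forall i : 'I_s, (j.+1 <= i)%N -> f p i = 0.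
pose phi := fun p => g p / \prod_i y i ^ f p i.
have hprod : forall p, \prod_i y i ^ f p i != 0.
  by move=> p; rewrite prodf_seq_neq0; apply/allP => i _; apply: expfz_neq0.
have [z [hz hzp]] : exists z : k, z != 0 /\ forall p, K p -> phi p = z ^ f p J.
  apply: (@ext1 k T K (fun p => f p J) phi).
  - by move=> p _; rewrite /phi mulf_neq0 ?invr_eq0.
  - move=> p p' hp hp'; have [p'' [hf hg]] := hcl p p'.
    exists p''; split.
    + by move=> i hi; rewrite hf hp ?hp' ?subr0.
    + by rewrite hf.
    + rewrite /phi hg (eq_bigr (fun i => y i ^ (f p i - f p' i))); last by move=> i _; rewrite hf.
      rewrite prod_expz_sub //; field.
      by rewrite (hnz p') (hprod p) (hprod p').
  - move=> p hp hJ; rewrite /phi -hyp ?divff //.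
    move=> i hi; case: (ltnP j i) => [lt|le]; first exact: hp.
    have -> : i = J by apply/val_inj => /=; apply/eqP; rewrite eqn_leq hi le.
    exact: hJ.
exists (fun i => if i == J then z else y i); split.
- by move=> i; case: (i == J).
- move=> i hi; have -> : (i == J) = false.
    by apply/negP => /eqP e; move: hi; rewrite e /= ltnn.
  by apply: hy1; apply: ltnW.
- move=> p hp.
  have -> : g p = phi p * \prod_i y i ^ f p i by rewrite /phi divfK.
  rewrite hzp // (bigD1 J) //= [in RHS](bigD1 J) //= eqxx hy1 // exp1rz mul1r.
  congr (_ * _); apply: eq_bigr => i hi; by rewrite (negbTE hi).
Qed.

Lemma pairingN n (m v : 'I_n -> int) :
  pairing (fun j => - m j) v = - pairing m v.
Proof. by rewrite /pairing -sumrN; apply: eq_bigr => j _; rewrite mulNr. Qed.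

Lemma pairing_inj n r (rho : 'I_r -> 'I_n -> int) (m m' : 'I_n -> int) :
  no_torus_factors rho -> (forall l, pairing m (rho l) = pairing m' (rho l)) -> m = m'.
Proof.
move=> hnt he; apply: functional_extensionality => j; apply/eqP; rewrite -subr_eq0; apply/eqP.
apply: (hnt (fun j => m j - m' j)) => l.
  by rewrite pairingB he subrr.
by rewrite pairingN pairingB he subrr oppr0.
Qed.

Lemma dualD n r (rho : 'I_r -> 'I_n -> int) m m' :
  dual_mem rho m -> dual_mem rho m' -> dual_mem rho (fun j => m j + m' j).
Proof. by move=> h h' l; rewrite pairingD addr_ge0. Qed.

Lemma dualZ n r (rho : 'I_r -> 'I_n -> int) (c : int) m :
  0 <= c -> dual_mem rho m -> dual_mem rho (fun j => c * m j).
Proof. by move=> hc h l; rewrite pairingZ mulr_ge0. Qed.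

Lemma Xpoint0 (k : fieldType) n r (rho : 'I_r -> 'I_n -> int) (u : ('I_n -> int) -> k) m :
  Xpoint rho u -> (forall j, m j = 0) -> u m = 1.
Proof.
move=> [h0 _] hm; have -> : m = (fun _ => 0) by apply: functional_extensionality.
exact: h0.
Qed.

Lemma XpointZ (k : fieldType) n r (rho : 'I_r -> 'I_n -> int) (u : ('I_n -> int) -> k) m (c : nat) :
  Xpoint rho u -> dual_mem rho m -> u (fun j => c%:Z * m j) = u m ^+ c.
Proof.
move=> hu hm; elim: c => [|c IH]; first by rewrite expr0; apply: (Xpoint0 hu) => j; rewrite mul0r.
have -> : (fun j => c.+1%:Z * m j) = (fun j => (c%:Z * m j) + m j).
  by apply: functional_extensionality => j; rewrite -addn1 PoszD mulrDl mul1r.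
rewrite (proj2 hu) ?IH ?exprSr //; exact: dualZ.
Qed.

Lemma Xpoint_sum (k : fieldType) n r (rho : 'I_r -> 'I_n -> int) (u : ('I_n -> int) -> k)
    (w : 'I_r -> 'I_n -> int) (I : pred 'I_r) (s : seq 'I_r) :
  Xpoint rho u -> (forall i, dual_mem rho (w i)) ->
  u (fun j => \sum_(i <- s | I i) w i j) = \prod_(i <- s | I i) u (w i).
Proof.
move=> hu hw; elim: s => [|a s IH].
  by rewrite big_nil; apply: (Xpoint0 hu) => j; rewrite big_nil.
have ds : dual_mem rho (fun j => \sum_(i <- s | I i) w i j).
  by move=> l; rewrite pairing_sum sumr_ge0 // => i _; apply: hw.
rewrite big_cons; case ha : (I a).
  have -> : (fun j => \sum_(i <- a :: s | I i) w i j) = (fun j => w a j + \sum_(i <- s | I i) w i j).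
    by apply: functional_extensionality => j; rewrite big_cons ha.
  by rewrite (proj2 hu) ?IH.
have -> : (fun j => \sum_(i <- a :: s | I i) w i j) = (fun j => \sum_(i <- s | I i) w i j).
  by apply: functional_extensionality => j; rewrite big_cons ha.
exact: IH.
Qed.

Lemma w_dual n r (rho : 'I_r -> 'I_n -> int) (D : int) (w : 'I_r -> 'I_n -> int) :
  0 < D -> (forall i l, pairing (w i) (rho l) = if l == i then D else 0) ->
  forall i, dual_mem rho (w i).
Proof. by move=> hD hw i l; rewrite hw; case: eqP => // _; apply: ltW. Qed.

Lemma W_pair n r (rho : 'I_r -> 'I_n -> int) (D : int) (w : 'I_r -> 'I_n -> int) (I : pred 'I_r) l :
  (forall i l, pairing (w i) (rho l) = if l == i then D else 0) ->
  pairing (fun j => \sum_(i | I i) w i j) (rho l) = if I l then D else 0.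
Proof.
move=> hw; rewrite pairing_sum; under eq_bigr do rewrite hw.
case hl : (I l).
  rewrite (bigD1 l) //= eqxx big1 ?addr0 // => i /andP [_ hi].
  by rewrite eq_sym (negbTE hi).
by apply: big1 => i hi; case: eqP => // e; rewrite e hi in hl.
Qed.

Lemma compl n r (rho : 'I_r -> 'I_n -> int) (D : int) (w : 'I_r -> 'I_n -> int) (I : pred 'I_r) m :
  0 < D -> (forall i l, pairing (w i) (rho l) = if l == i then D else 0) ->
  (forall l, ~~ I l -> pairing m (rho l) = 0) ->
  let N := (\sum_l `|pairing m (rho l)|%N)%N in
  let m' := (fun j => N%:Z * (\sum_(i | I i) w i j) - m j) in
  [/\ dual_mem rho m', forall l, ~~ I l -> pairing m' (rho l) = 0 &
      (fun j => m j + m' j) = (fun j => N%:Z * (\sum_(i | I i) w i j))].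
Proof.
move=> hD hw hm N m'; split.
- move=> l; rewrite /m' pairingB pairingZ (W_pair _ _ hw).
  case hl : (I l); last by rewrite mulr0 hm ?hl // subr0.
  have : (`|pairing m (rho l)|%N <= N)%N by rewrite /N (bigD1 l) //= leq_addr.
  move: (pairing m (rho l)) => a ha; nia.
- move=> l hl; by rewrite /m' pairingB pairingZ (W_pair _ _ hw) (negbTE hl) mulr0 hm // subr0.
- by apply: functional_extensionality => j; rewrite /m' addrC subrK.
Qed.

Lemma surj (k : closedFieldType) n r (rho : 'I_r -> 'I_n -> int) (D : int) (w : 'I_r -> 'I_n -> int)
    (u : ('I_n -> int) -> k) :
  no_torus_factors rho -> 0 < D ->
  (forall i l, pairing (w i) (rho l) = if l == i then D else 0) ->
  Xpoint rho u -> exists x0, in_fiber rho u x0.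
Proof.
move=> hnt hD hw hu.
have wd := w_dual hD hw.
pose I := fun i => u (w i) != 0.
pose L := fun m => dual_mem rho m /\ forall l, ~~ I l -> pairing m (rho l) = 0.
have Lnz : forall m, L m -> u m != 0.
  move=> m [hm hmI].
  have [dm' _ e] := compl hD hw hmI.
  set N := (\sum_l `|pairing m (rho l)|%N)%N in dm' e.
  set m' := (fun j => _) in dm' e.
  have := congr1 u e; rewrite (proj2 hu) // (@XpointZ _ _ _ rho u) //; last first.
    by move=> l; rewrite (W_pair _ _ hw); case: (I l) => //; apply: ltW.
  rewrite (@Xpoint_sum _ _ _ rho u) // => e2.
  have : (\prod_(i | I i) u (w i)) ^+ N != 0.
    by rewrite expf_neq0 // prodf_seq_neq0; apply/allP => i _; apply/implyP.
  by rewrite -e2 mulf_eq0 negb_or => /andP [].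
have Lz : forall m, dual_mem rho m -> ~ L m -> u m = 0.
  move=> m hm hL.
  have [l [hl hml]] : exists l, ~~ I l /\ pairing m (rho l) != 0.
    apply: NNPP => hne; apply: hL; split => // l hl; apply/eqP; apply: NNPP => h.
    by apply: hne; exists l; split => //; apply/negP.
  pose c := `|pairing m (rho l)|%N.
  pose rest := fun j => D * m j - c%:Z * w l j.
  have drest : dual_mem rho rest.
    move=> l'; rewrite /rest pairingB !pairingZ hw.
    case: eqP => [->|_]; last by rewrite mulr0 subr0 mulr_ge0 // ltW.
    by rewrite /c gez0_abs ?hm // mulrC subrr.
  have e : (fun j => `|D|%N%:Z * m j) = (fun j => c%:Z * w l j + rest j).
    by apply: functional_extensionality => j; rewrite /rest gtz0_abs // addrC subrK.
  have := congr1 u e; rewrite (@XpointZ _ _ _ rho u) // (proj2 hu) //; last exact: dualZ.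
  rewrite (@XpointZ _ _ _ rho u) // (eqP (negbNE hl)) expr0n.
  have -> : (c == 0%N) = false by rewrite /c absz_eq0; apply/negbTE.
  rewrite mul0r => /eqP; rewrite expf_eq0 => /andP [_ /eqP] //.
pose T := {pp : ('I_n -> int) * ('I_n -> int) | L pp.1 /\ L pp.2}.
pose f := fun (pp : T) l => pairing (sval pp).1 (rho l) - pairing (sval pp).2 (rho l).
pose g := fun (pp : T) => u (sval pp).1 / u (sval pp).2.
have LD : forall m m', L m -> L m' -> L (fun j => m j + m' j).
  move=> m m' [h1 h2] [h1' h2']; split; first exact: dualD.
  by move=> l hl; rewrite pairingD h2 ?h2' ?addr0.
have [y [hy hyg]] : exists y : 'I_r -> k, (forall i, y i != 0) /\ forall pp, g pp = \prod_i y i ^ f pp i.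
  apply: ext.
  - by move=> [[m1 m2] [h1 h2]]; rewrite /g /= mulf_neq0 ?invr_eq0 ?Lnz.
  - move=> [[m1 m2] [h1 h2]] [[m1' m2'] [h1' h2']].
    exists (exist _ ((fun j => m1 j + m2' j), (fun j => m2 j + m1' j)) (conj (LD _ _ h1 h2') (LD _ _ h2 h1'))).
    split; first by move=> i; rewrite /f /= !pairingD; ring.
    have n1 := Lnz _ h1; have n2 := Lnz _ h2; have n3 := Lnz _ h1'; have n4 := Lnz _ h2'.
    simpl in n1, n2, n3, n4, h1, h2, h1', h2'.
    rewrite /g /= !(proj2 hu); try by [case: h1|case: h2|case: h1'|case: h2'].
    by field; rewrite n2 n3 n4.
  - move=> [[m1 m2] [h1 h2]] /= hf; rewrite /g /=.
    have -> : m1 = m2 by apply: (pairing_inj hnt) => l; apply/eqP; rewrite -subr_eq0; apply/eqP; apply: hf.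
    by rewrite divff // Lnz.
exists (fun i => if I i then y i else 0) => m hm.
case: (classic (L m)) => hL; last first.
  rewrite Lz //.
  have [l [hl hml]] : exists l, ~~ I l /\ pairing m (rho l) != 0.
    apply: NNPP => hne; apply: hL; split => // l hl; apply/eqP; apply: NNPP => h.
    by apply: hne; exists l; split => //; apply/negP.
  rewrite /piX (bigD1 l) //= (negbTE hl) exp0rz (negbTE hml) mul0r //.
have L0 : L (fun _ => 0) by split => [l|l _]; rewrite pairing0.
have := hyg (exist _ (m, fun _ => 0) (conj hL L0)); rewrite /g /f /= (proj1 hu) divr1 => ->.
apply: eq_bigr => l _; rewrite pairing0 subr0.
case hl : (I l) => //.
by rewrite (proj2 hL) ?hl // !expr0z.
Qed.

Lemma piX_w (k : fieldType) n r (rho : 'I_r -> 'I_n -> int) (D : int) (w : 'I_r -> 'I_n -> int)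
    (y : 'I_r -> k) i :
  (forall i l, pairing (w i) (rho l) = if l == i then D else 0) ->
  piX rho y (w i) = y i ^ D.
Proof.
move=> hw; rewrite /piX (bigD1 i) //= hw eqxx big1 ?mulr1 // => l hl.
by rewrite hw (negbTE hl) expr0z.
Qed.

Lemma orbit (k : closedFieldType) n r (rho : 'I_r -> 'I_n -> int) (D : int) (w : 'I_r -> 'I_n -> int)
    (u : ('I_n -> int) -> k) (x0 x : 'I_r -> k) :
  0 < D ->
  (forall i l, pairing (w i) (rho l) = if l == i then D else 0) ->
  in_fiber rho u x0 -> in_fiber rho u x ->
  exists t, Gmem rho t /\ forall i, x i = act t x0 i.
Proof.
move=> hD hw h0 hx.
have wd := w_dual hD hw.
have hz : forall i, (x i == 0) = (x0 i == 0).
  move=> i; have := h0 _ (wd i); rewrite -(hx _ (wd i)) !(piX_w _ _ hw) => e.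
  apply/idP/idP => /eqP z.
    move: e; rewrite z exp0rz gt_eqF // mulr0z => /eqP; by rewrite expfz_eq0 gt_eqF.
  by move: e; rewrite z exp0rz gt_eqF // mulr0z => /esym/eqP; rewrite expfz_eq0 gt_eqF.
pose I := fun i => x0 i != 0.
pose rh := fun i => if I i then x i / x0 i else 1.
have rhnz : forall i, rh i != 0.
  move=> i; rewrite /rh; case hi : (I i); last exact: oner_neq0.
  by rewrite mulf_neq0 ?invr_eq0 // hz.
have dual1 : forall m, dual_mem rho m -> (forall l, ~~ I l -> pairing m (rho l) = 0) ->
    \prod_l rh l ^ pairing m (rho l) = 1.
  move=> m hm hmI.
  have e : \prod_l rh l ^ pairing m (rho l) =
           \prod_l x l ^ pairing m (rho l) / \prod_l x0 l ^ pairing m (rho l).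
    rewrite -prodf_div; apply: eq_bigr => l _; rewrite /rh.
    case hl : (I l); last by rewrite hmI ?hl // !expr0z divr1.
    by rewrite expfzMl expfV.
  rewrite e; have := hx _ hm; rewrite -(h0 _ hm) /piX => ->; rewrite divff //.
  rewrite prodf_seq_neq0; apply/allP => l _; apply/implyP => _.
  case hl : (I l); first exact: expfz_neq0.
  by rewrite hmI ?hl // expr0z oner_neq0.
have K' : forall m, (forall l, ~~ I l -> pairing m (rho l) = 0) ->
    \prod_l rh l ^ pairing m (rho l) = 1.
  move=> m hmI.
  have [dm' hm'I e] := compl hD hw hmI.
  set N := (\sum_l `|pairing m (rho l)|%N)%N in dm' hm'I e.
  set m' := (fun j => _) in dm' hm'I e.
  set W := (fun j => N%:Z * _) in e.
  have hWd : dual_mem rho W.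
    apply: dualZ => // l; rewrite (W_pair _ _ hw); case: (I l) => //; exact: ltW.
  have hWI : forall l, ~~ I l -> pairing W (rho l) = 0.
    by move=> l hl; rewrite pairingZ (W_pair _ _ hw) (negbTE hl) mulr0.
  have em : forall l, pairing m (rho l) = pairing W (rho l) - pairing m' (rho l).
    by move=> l; rewrite -e pairingD addrK.
  under eq_bigr do rewrite em.
  rewrite (@prod_expz_sub k r rh (fun l => pairing W (rho l)) (fun l => pairing m' (rho l)) rhnz). 
  by rewrite (dual1 W hWd hWI) (dual1 m' dm' hm'I) divr1.
pose T := {pb : ('I_n -> int) * ('I_r -> int) | forall l, ~~ I l -> pb.2 l = 0}.
pose f := fun (pb : T) l => pairing (sval pb).1 (rho l) + (sval pb).2 l.
pose g := fun (pb : T) => \prod_l rh l ^ (sval pb).2 l.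
have [t [ht htg]] : exists t : 'I_r -> k, (forall i, t i != 0) /\ forall pb, g pb = \prod_i t i ^ f pb i.
  apply: ext.
  - move=> pb; rewrite /g prodf_seq_neq0; apply/allP => l _; apply/implyP => _.
    exact: expfz_neq0.
  - move=> [[m b] hb] [[m' b'] hb']; simpl in hb, hb'.
    have hb'' : forall l, ~~ I l -> (fun l => b l - b' l) l = 0.
      by move=> l hl /=; rewrite hb ?hb' ?subr0.
    exists (exist _ ((fun j => m j - m' j), (fun l => b l - b' l)) hb''); split.
      by move=> i; rewrite /f /= pairingB; ring.
    by rewrite /g /= prod_expz_sub.
  - move=> [[m b] hb] /= hf; simpl in hb; rewrite /g /=.
    have eb : forall l, b l = - pairing m (rho l).
      by move=> l; apply/eqP; rewrite -subr_eq0 opprK addrC; apply/eqP; apply: hf.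
    have hmI : forall l, ~~ I l -> pairing m (rho l) = 0.
      by move=> l hl; apply/eqP; rewrite -oppr_eq0 -eb hb.
    under eq_bigr do rewrite eb -invr_expz.
    by rewrite prodfV K' // invr1.
exists t; split.
  split => // m.
  have hb0 : forall l, ~~ I l -> (fun _ : 'I_r => (0 : int)) l = 0 by [].
  have := htg (exist _ (m, fun _ => 0) hb0); rewrite /g /f /=.
  rewrite big1 => [e|l _]; last exact: expr0z.
  by rewrite [RHS]e; apply: eq_bigr => l _; rewrite addr0.
move=> i; rewrite /act.
case hi : (I i); last first.
  move: hi; rewrite /I => /negbFE/eqP z; have /eqP xz : x i == 0 by rewrite hz z.
  by rewrite xz z mulr0.
pose ei := fun l : 'I_r => if l == i then (1 : int) else 0.
have hbi : forall l, ~~ I l -> ei l = 0.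
  by move=> l hl; rewrite /ei; case: eqP => // e; rewrite e hi in hl.
have := htg (exist _ ((fun _ => 0), ei) hbi); rewrite /g /f /=.
have ex : forall (z : 'I_r -> k), \prod_l z l ^ ei l = z i.
  move=> z; rewrite (bigD1 i) //= /ei eqxx expr1z big1 ?mulr1 // => l hl.
  by rewrite (negbTE hl) expr0z.
rewrite ex (eq_bigr (fun l => t l ^ ei l)); last by move=> l _; rewrite pairing0 add0r.
rewrite ex /rh hi => <-.
by rewrite divfK.
Qed.

Lemma stepB (k : closedFieldType) n r (rho : 'I_r -> 'I_n -> int) (D : int) (w : 'I_r -> 'I_n -> int) :
  no_torus_factors rho -> 0 < D ->
  (forall i l, pairing (w i) (rho l) = if l == i then D else 0) ->
  forall u : ('I_n -> int) -> k, Xpoint rho u -> in_U rho u.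
Proof.
move=> hnt hD hw u hu.
have [x0 h0] := surj hnt hD hw hu.
exists x0 => x; split; first exact: orbit hD hw h0.
move=> [t [ht hxt]] m hm; rewrite -(h0 m hm) /piX.
rewrite (eq_bigr (fun l => t l ^ pairing m (rho l) * x0 l ^ pairing m (rho l))); last first.
  by move=> l _; rewrite hxt /act expfzMl.
by rewrite big_split /= (proj2 ht m) mul1r.
Qed.

Lemma data_w n r (rho : 'I_r -> 'I_n -> int) :
  (forall i, exists m, [/\ dual_mem rho m, 0 < pairing m (rho i) &
     forall l, l != i -> pairing m (rho l) = 0]) ->
  exists D (w : 'I_r -> 'I_n -> int), 0 < D /\
    forall i l, pairing (w i) (rho l) = if l == i then D else 0.
Proof.
move=> h; have [mi hmi] := choice _ h.
pose c := fun i => pairing (mi i) (rho i).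
have cpos : forall i, 0 < c i by move=> i; have [] := hmi i.
exists (\prod_i c i), (fun i j => (\prod_(l | l != i) c l) * mi i j); split.
  by apply: prodr_gt0 => i _.
move=> i l; rewrite pairingZ; case: eqP => [->|hl].
  by rewrite [in RHS](bigD1 i) //= mulrC.
by have [_ _ ->] := hmi i; rewrite ?mulr0 //; apply/eqP.
Qed.

Theorem lemma3p1 (k : closedFieldType) (n r : nat) (rho : 'I_r -> 'I_n -> int) :
  [pchar k] =i pred0 ->
  strongly_convex rho ->
  ray_generators rho ->
  no_torus_factors rho ->
  exists S : 'X_{1..r} -> Prop,
    [/\ forall m, S m -> m != 0%MM /\ G_invariant rho ('X_[m] : {mpoly k[r]}),
        generates_inv k rho S,
        (forall x : 'I_r -> k, (forall m, S m -> ('X_[m] : {mpoly k[r]}).@[x] = 0) ->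
           in_fiber rho (piX rho (fun _ => 0)) x) &
        ((exists u : ('I_n -> int) -> k, Xpoint rho u /\ ~ in_U rho u) ->
         forall x : 'I_r -> k, (forall m, S m -> ('X_[m] : {mpoly k[r]}).@[x] = 0) ->
           ~ in_U rho (piX rho x))].
Proof.
move=> ch _ _ hnt.
exists (fun a => a != 0%MM /\ G_invariant rho ('X_[a] : {mpoly k[r]})); split.
- by [].
- exact: generation.
- move=> x hx m hm; apply: (cond3 _ hm) => a ha; exact: hx.
- move=> [u0 [hu0 hnU]] x hx [x1 h1]; apply: hnU.
  have U0 : in_U rho (piX rho (fun _ : 'I_r => (0 : k))).
    exists x1 => y; rewrite -h1; split => hy m hm.
      by rewrite (hy m hm) (cond3 hx hm).
    by rewrite (hy m hm) (cond3 hx hm).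
  have [D [w [hD hw]]] := data_w (stepA U0).
  exact: stepB hnt hD hw u0 hu0.
Qed.
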